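(* Let $X$ and $Y$ be Banach spaces and $f\colon X\to Y$ a coarse map (i.e. $\omega_f(t)<\infty$ for all $t\ge0$). Then there exist an index set $I$, a nonprincipal ultrafilter $\mathcal U$ on $I$, and a map $F\colon X\to \ell_1(Y)^I/\mathcal U$ such that for all $x,y\in X$, $$\rho_f(\|x-y\|)\le\|F(x)-F(y)\|\le\omega_f(\|x-y\|)\quad\text{and}\quad \|F(x)-F(y)\|=\|F(x-y)\|.$$
   Context: $\omega_f(t)=\sup\{\|f(x)-f(y)\|:\|x-y\|\le t\}$, $\rho_f(t)=\inf\{\|f(x)-f(y)\|:\|x-y\|\ge t\}$. $\ell_1(Y)$ is the $\ell_1$-sum of countably many copies of $Y$. For a Banach space $Z$, an index set $I$ and a nonprincipal ultrafilter $\mathcal U$ on $I$, the ultrapower $Z^I/\mathcal U$ is the space of norm-bounded families $(z_i)_{i\in I}$ modulo $(z_i)\sim(w_i)$ iff $\lim_{i,\mathcal U}\|z_i-w_i\|=0$, with norm $\lim_{i,\mathcal U}\|z_i\|$. *)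

(* Defs.v *)
From Stdlib Require Import Reals Lra ClassicalEpsilon.
Open Scope R_scope.
Set Implicit Arguments.

Record NormedSpace : Type := {
  ns_car :> Type;
  ns_zero : ns_car;
  ns_add : ns_car -> ns_car -> ns_car;
  ns_opp : ns_car -> ns_car;
  ns_scal : R -> ns_car -> ns_car;
  ns_norm : ns_car -> R;
  ns_add_assoc : forall x y z, ns_add x (ns_add y z) = ns_add (ns_add x y) z;
  ns_add_comm : forall x y, ns_add x y = ns_add y x;
  ns_add_0 : forall x, ns_add x ns_zero = x;
  ns_add_opp : forall x, ns_add x (ns_opp x) = ns_zero;
  ns_scal_assoc : forall a b x, ns_scal a (ns_scal b x) = ns_scal (a * b) x;
  ns_scal_1 : forall x, ns_scal 1 x = x;
  ns_scal_distr_v : forall a x y, ns_scal a (ns_add x y) = ns_add (ns_scal a x) (ns_scal a y);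
  ns_scal_distr_s : forall a b x, ns_scal (a + b) x = ns_add (ns_scal a x) (ns_scal b x);
  ns_norm_eq0 : forall x, ns_norm x = 0 -> x = ns_zero;
  ns_norm_triangle : forall x y, ns_norm (ns_add x y) <= ns_norm x + ns_norm y;
  ns_norm_scal : forall a x, ns_norm (ns_scal a x) = Rabs a * ns_norm x
}.

Arguments ns_add {n}. Arguments ns_opp {n}. Arguments ns_scal {n}. Arguments ns_norm {n}.

Definition vsub {X : NormedSpace} (x y : X) : X := ns_add x (ns_opp y).
Definition ndist {X : NormedSpace} (x y : X) : R := ns_norm (vsub x y).

Definition Banach (X : NormedSpace) : Prop :=
  forall u : nat -> X,
    (forall eps, 0 < eps -> exists N, forall m n, (N <= m)%nat -> (N <= n)%nat ->
        ndist (u m) (u n) < eps) ->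
    exists l : X, forall eps, 0 < eps -> exists N, forall n, (N <= n)%nat ->
        ndist (u n) l < eps.

(** Supremum / infimum of a set of reals (the true sup/inf whenever it exists). *)
Definition Rsup (E : R -> Prop) : R :=
  epsilon (inhabits 0) (fun s => is_lub E s).
Definition Rinf (E : R -> Prop) : R := - Rsup (fun r => E (- r)).

Definition omega_set {X Y : NormedSpace} (f : X -> Y) (t : R) : R -> Prop :=
  fun r => exists x y : X, ndist x y <= t /\ r = ndist (f x) (f y).
Definition rho_set {X Y : NormedSpace} (f : X -> Y) (t : R) : R -> Prop :=
  fun r => exists x y : X, ndist x y >= t /\ r = ndist (f x) (f y).
Definition omega_f {X Y : NormedSpace} (f : X -> Y) (t : R) : R := Rsup (omega_set f t).
Definition rho_f {X Y : NormedSpace} (f : X -> Y) (t : R) : R := Rinf (rho_set f t).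

Definition coarse {X Y : NormedSpace} (f : X -> Y) : Prop :=
  forall t, 0 <= t -> bound (omega_set f t).

Definition summable (a : nat -> R) : Prop :=
  exists l, Un_cv (fun n => sum_f_R0 a n) l.
Definition series_sum (a : nat -> R) : R :=
  epsilon (inhabits 0) (fun l => Un_cv (fun n => sum_f_R0 a n) l).

Definition l1 (Y : NormedSpace) : Type :=
  { s : nat -> Y | summable (fun n => ns_norm (s n)) }.
Definition l1_norm {Y : NormedSpace} (s : l1 Y) : R :=
  series_sum (fun n => ns_norm (proj1_sig s n)).
Definition l1_dist {Y : NormedSpace} (s t : l1 Y) : R :=
  series_sum (fun n => ndist (proj1_sig s n) (proj1_sig t n)).

Definition ultrafilter {I : Type} (U : (I -> Prop) -> Prop) : Prop :=
  U (fun _ => True) /\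
  ~ U (fun _ => False) /\
  (forall A B : I -> Prop, U A -> (forall i, A i -> B i) -> U B) /\
  (forall A B : I -> Prop, U A -> U B -> U (fun i => A i /\ B i)) /\
  (forall A : I -> Prop, U A \/ U (fun i => ~ A i)).
Definition nonprincipal {I : Type} (U : (I -> Prop) -> Prop) : Prop :=
  forall i0 : I, ~ U (fun i => i = i0).

Definition ulim {I : Type} (U : (I -> Prop) -> Prop) (a : I -> R) (L : R) : Prop :=
  forall eps, 0 < eps -> U (fun i => Rabs (a i - L) < eps).

(** A family (z_i) in l_1(Y)^I is norm-bounded (an element of the ultrapower). *)
Definition l1_bounded_family {I : Type} {Y : NormedSpace} (z : I -> l1 Y) : Prop :=
  exists M, forall i, l1_norm (z i) <= M.

(* Main.v *)
Require Import Defs.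
From Stdlib Require Import Reals.
Open Scope R_scope.
From mathcomp Require classical_sets filter boolp all_boot.
From HB Require structures.
Module UF.
From HB Require Import structures.
From mathcomp Require Import all_boot classical_sets filter boolp.
Local Open Scope classical_set_scope.

Lemma exists_ultra (I J : Type) (P : J -> I -> Prop) (j0 : J)
  (Pne : forall j, exists i, P j i)
  (Pdir : forall j1 j2, exists j3, forall i, P j3 i -> P j1 i /\ P j2 i) :
  exists U : (I -> Prop) -> Prop, ultrafilter U /\ forall j, U (P j).
Proof.
pose F : set_system I := fun A => exists j, forall i, P j i -> A i.
have FF : ProperFilter F.
  apply: Build_ProperFilter_ex.
    move=> A [j Hj]; have [i Pi] := Pne j; exists i; exact: Hj.
  split.
  - by exists j0.
  - move=> A B [j1 H1] [j2 H2]; have [j3 H3] := Pdir j1 j2.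
    by exists j3 => i /H3 [/H1 ? /H2 ?].
  - by move=> A B AB [j H]; exists j => i /H /AB.
have [G [UG FG]] := ultraFilterLemma FF.
have GF : Filter G by case: UG => -[].
exists G; split; last by move=> j; apply: FG; exists j.
split; first exact: filterT.
split; first by have := @filter_not_empty _ G (@ultra_proper _ _ UG).
split; first by move=> A B GA AB; exact: (filterS AB).
split; first by move=> A B GA GB; exact: filterI.
by move=> A; exact: in_ultra_setVsetC.
Qed.
End UF.
From Stdlib Require Import Lra Lia List FunctionalExtensionality ClassicalEpsilon Classical.
Import ListNotations.
Set Bullet Behavior "Strict Subproofs".
Section Grp.
Variable V : NormedSpace.
Declare Scope ns_scope.
Notation "a + b" := (ns_add a b) : ns_scope.
Notation "- a" := (ns_opp a) : ns_scope.
Notation O := (ns_zero V).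
Local Open Scope ns_scope.

Lemma add0l (x : V) : O + x = x.
Proof. rewrite ns_add_comm; apply ns_add_0. Qed.
Lemma addNl (x : V) : (- x) + x = O.
Proof. rewrite ns_add_comm; apply ns_add_opp. Qed.
Lemma add_cancel (a x y : V) : a + x = a + y -> x = y.
Proof.
  intros H. rewrite <- (add0l x), <- (add0l y), <- (addNl a), <- !ns_add_assoc, H; reflexivity.
Qed.
Lemma opp_unique (x y : V) : x + y = O -> y = - x.
Proof. intros H; apply (add_cancel x); rewrite H, ns_add_opp; reflexivity. Qed.
Lemma opp_opp (x : V) : - (- x) = x.
Proof. symmetry; apply opp_unique; apply addNl. Qed.
Lemma opp_add (x y : V) : - (x + y) = (- x) + (- y).
Proof.
  symmetry; apply opp_unique.
  rewrite (ns_add_comm _ (-x)), ns_add_assoc, <- (ns_add_assoc _ x y), ns_add_opp, ns_add_0, ns_add_opp; reflexivity.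
Qed.
Lemma scal0 (x : V) : ns_scal 0 x = O.
Proof.
  assert (H : ns_scal 0 x = ns_scal 0 x + ns_scal 0 x).
  { rewrite <- ns_scal_distr_s; f_equal; ring. }
  transitivity (ns_add (ns_add (ns_scal 0 x) (ns_scal 0 x)) (ns_opp (ns_scal 0 x))).
  - rewrite <- ns_add_assoc, ns_add_opp, ns_add_0; reflexivity.
  - rewrite <- H; apply ns_add_opp.
Qed.
Lemma scal_zero (a : R) : ns_scal a O = O.
Proof. rewrite <- (scal0 O), ns_scal_assoc, Rmult_0_r; reflexivity. Qed.
Lemma scal_opp (a : R) (x : V) : ns_scal a (- x) = - ns_scal a x.
Proof. apply opp_unique; rewrite <- ns_scal_distr_v, ns_add_opp; apply scal_zero. Qed.
Lemma opp_scal (x : V) : - x = ns_scal (-1) x.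
Proof.
  symmetry; apply opp_unique. rewrite <- (ns_scal_1 _ x) at 1.
  rewrite <- ns_scal_distr_s, Rplus_opp_r; apply scal0.
Qed.
Lemma norm_opp (x : V) : ns_norm (- x) = ns_norm x.
Proof. rewrite opp_scal, ns_norm_scal. replace (Rabs (-1)) with 1; [ring|]. unfold Rabs; destruct (Rcase_abs (-1)); lra. Qed.
Lemma norm_zero : ns_norm O = 0.
Proof. rewrite <- (scal0 O), ns_norm_scal, Rabs_R0; ring. Qed.
Lemma norm_ge0 (x : V) : 0 <= ns_norm x.
Proof.
  pose proof (ns_norm_triangle _ x (- x)) as H. rewrite ns_add_opp, norm_zero, norm_opp in H. lra.
Qed.
Lemma ndist_ge0 (x y : V) : 0 <= ndist x y.
Proof. apply norm_ge0. Qed.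

Lemma idA (x y a : V) : (vsub x y) + (y + a) = x + a.
Proof.
  unfold vsub. rewrite <- ns_add_assoc, (ns_add_assoc _ (- y)), addNl, add0l; reflexivity.
Qed.
Lemma idB (x y a : V) : vsub (x + a) (y + a) = vsub x y.
Proof.
  unfold vsub. rewrite opp_add, (ns_add_comm _ (-y)), ns_add_assoc, <- (ns_add_assoc _ x a), ns_add_opp, ns_add_0.
  reflexivity.
Qed.
Lemma idE (x a : V) : vsub (x + a) a = x.
Proof. unfold vsub. rewrite <- ns_add_assoc, ns_add_opp, ns_add_0; reflexivity. Qed.
Lemma idC (u v c : V) : vsub (vsub u c) (vsub v c) = vsub u v.
Proof.
  unfold vsub. rewrite opp_add, opp_opp, (ns_add_comm _ (-v)).
  rewrite ns_add_assoc, <- (ns_add_assoc _ u), addNl, ns_add_0; reflexivity.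
Qed.
Lemma idS (a : R) (p q : V) : vsub (ns_scal a p) (ns_scal a q) = ns_scal a (vsub p q).
Proof. unfold vsub. rewrite ns_scal_distr_v, scal_opp; reflexivity. Qed.
Lemma idA2 (k : nat) (y a : V) : y + (ns_scal (INR k) y + a) = ns_scal (INR (S k)) y + a.
Proof.
  rewrite S_INR, ns_scal_distr_s, ns_scal_1, ns_add_assoc, (ns_add_comm _ y); reflexivity.
Qed.
Lemma idA3 (z w a : V) : z + (w + a) = w + (z + a).
Proof. rewrite !ns_add_assoc, (ns_add_comm _ z); reflexivity. Qed.
Lemma id0 (y a : V) : ns_scal (INR 0) y + a = a.
Proof. simpl; rewrite scal0; apply add0l. Qed.
End Grp.
Definition lsum (l : list R) : R := fold_right Rplus 0 l.
Lemma lsum_app l1 l2 : lsum (l1 ++ l2) = lsum l1 + lsum l2.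
Proof. induction l1; simpl; [ring| rewrite IHl1; ring]. Qed.
Lemma lsum_scal {T} (c : R) (g : T -> R) (l : list T) :
  lsum (map (fun p => c * g p) l) = c * lsum (map g l).
Proof. induction l; simpl; [ring| rewrite IHl; ring]. Qed.
Lemma lsum_flat {U} (phi : U -> R) (F : nat -> list U) (N : nat) :
  lsum (map phi (flat_map F (seq 0 (S N)))) = sum_f_R0 (fun k => lsum (map phi (F k))) N.
Proof.
  induction N.
  - simpl. rewrite app_nil_r; reflexivity.
  - rewrite seq_S, flat_map_app, map_app, lsum_app, IHN. simpl. rewrite app_nil_r; reflexivity.
Qed.

Lemma telescope (g : nat -> R) N : sum_f_R0 (fun k => g (S k) - g k) N = g (S N) - g 0%nat.
Proof. induction N; simpl; [ring| rewrite IHN; ring]. Qed.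

Lemma series_fin {T} (mu : list T) (d : T) (psi : T -> R) : psi d = 0 ->
  summable (fun n => psi (nth n mu d)) /\ series_sum (fun n => psi (nth n mu d)) = lsum (map psi mu).
Proof.
  intros Hd.
  assert (L1 : sum_f_R0 (fun n => psi (nth n mu d)) (length mu) = lsum (map psi mu)).
  { induction mu as [|p mu IH]; [simpl; exact Hd|].
    change (length (p :: mu)) with (S (length mu)).
    rewrite (decomp_sum _ (S (length mu))) by lia. simpl pred. cbn [nth]. rewrite IH; reflexivity. }
  assert (L2 : forall n, (length mu <= n)%nat -> sum_f_R0 (fun n => psi (nth n mu d)) n = lsum (map psi mu)).
  { intros n Hn; induction Hn; [exact L1|]. simpl. rewrite IHHn, nth_overflow by lia. rewrite Hd; ring. }
  assert (Hcv : Un_cv (fun n => sum_f_R0 (fun n => psi (nth n mu d)) n) (lsum (map psi mu))).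
  { intros eps He. exists (length mu). intros n Hn. rewrite L2 by lia. rewrite R_dist_eq; exact He. }
  split; [exists (lsum (map psi mu)); exact Hcv|].
  unfold series_sum. apply (UL_sequence (fun n => sum_f_R0 (fun n => psi (nth n mu d)) n)); [|exact Hcv].
  apply epsilon_spec. exists (lsum (map psi mu)); exact Hcv.
Qed.

Lemma ulim_exists {I : Type} (U : (I -> Prop) -> Prop) (a : I -> R) m M :
  ultrafilter U -> (forall i, m <= a i <= M) -> exists L, ulim U a L /\ m <= L <= M.
Proof.
  intros [UT [UF [US [UI UU]]]] Ha.
  set (S := fun t => U (fun i => t <= a i)).
  assert (Sm : S m) by (apply (US _ _ UT); intros i _; apply Ha).
  assert (SM : forall t, S t -> t <= M).
  { intros t St. destruct (Rle_dec t M) as [|n]; [assumption|].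
    exfalso; apply UF; apply (US _ _ St). intros i Hi. pose proof (Ha i); lra. }
  destruct (completeness S) as [L [HL1 HL2]].
  { exists M; intros t St; apply SM, St. }
  { exists m; exact Sm. }
  exists L. split; [|split; [apply HL1, Sm| apply HL2; intros t St; apply SM, St]].
  intros eps He.
  assert (A1 : U (fun i => L - eps < a i)).
  { destruct (classic (exists t, S t /\ L - eps < t)) as [[t [St Ht]]|Hn].
    - apply (US _ _ St). intros i Hi; lra.
    - exfalso. assert (L <= L - eps); [|lra]. apply HL2. intros t St.
      destruct (Rle_dec t (L - eps)); [assumption|]. exfalso; apply Hn; exists t; split; [assumption|lra]. }
  assert (A2 : U (fun i => a i < L + eps)).
  { destruct (UU (fun i => L + eps / 2 <= a i)) as [H|H].
    - exfalso. assert (L + eps/2 <= L) by (apply HL1; exact H). lra.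
    - apply (US _ _ H). intros i Hi. lra. }
  apply (US _ _ (UI _ _ A1 A2)). intros i [H1 H2]. apply Rabs_def1; lra.
Qed.

Lemma ulim_close {I : Type} (U : (I -> Prop) -> Prop) (a b : I -> R) L :
  ultrafilter U -> ulim U a L -> (forall eps, 0 < eps -> U (fun i => Rabs (a i - b i) < eps)) ->
  ulim U b L.
Proof.
  intros [UT [UF [US [UI UU]]]] Ha Hab eps He.
  apply (US _ _ (UI _ _ (Ha (eps/2) ltac:(lra)) (Hab (eps/2) ltac:(lra)))).
  intros i [H1 H2]. replace (b i - L) with ((a i - L) - (a i - b i)) by ring.
  eapply Rle_lt_trans; [apply Rabs_triang|]. rewrite Rabs_Ropp. lra.
Qed.

Lemma Rsup_ub (E : R -> Prop) r : bound E -> E r -> r <= Rsup E.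
Proof.
  intros Hb Er. unfold Rsup.
  assert (H : is_lub E (epsilon (inhabits 0) (fun s => is_lub E s))).
  { apply epsilon_spec. destruct (completeness E) as [s Hs]; [exact Hb| exists r; exact Er|]. exists s; exact Hs. }
  apply H, Er.
Qed.
Lemma Rinf_lb (E : R -> Prop) r : (forall s, E s -> 0 <= s) -> E r -> Rinf E <= r.
Proof.
  intros Hp Er. unfold Rinf.
  assert (- r <= Rsup (fun s => E (- s))); [|lra].
  apply Rsup_ub.
  - exists 0. intros s Es. pose proof (Hp _ Es); lra.
  - rewrite Ropp_involutive; exact Er.
Qed.
Section Box.
Variable X : NormedSpace.

Fixpoint EE (G : list X) (N : nat) (h : X -> R) : R :=
  match G with
  | nil => h (ns_zero X)
  | y :: G' => / INR (S N) * sum_f_R0 (fun k => EE G' N (fun a => h (ns_add (ns_scal (INR k) y) a))) N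
  end.

Fixpoint box (G : list X) (N : nat) : list (R * X) :=
  match G with
  | nil => [(1, ns_zero X)]
  | y :: G' => flat_map (fun k => map (fun p => (/ INR (S N) * fst p, ns_add (ns_scal (INR k) y) (snd p))) (box G' N)) (seq 0 (S N))
  end.

Lemma box_cons y G N : box (y :: G) N = flat_map (fun k => map (fun p => (/ INR (S N) * fst p, ns_add (ns_scal (INR k) y) (snd p))) (box G N)) (seq 0 (S N)).
Proof. reflexivity. Qed.

Lemma box_E G N : forall h, lsum (map (fun p => fst p * h (snd p)) (box G N)) = EE G N h.
Proof.
  induction G as [|y G IH]; intros h; [simpl; ring|].
  rewrite box_cons, lsum_flat. cbn [EE]. rewrite scal_sum.
  apply sum_eq. intros k _. rewrite map_map. simpl.
  rewrite <- (IH (fun a => h (ns_add (ns_scal (INR k) y) a))).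
  rewrite Rmult_comm, <- lsum_scal. f_equal. apply map_ext. intros p. ring.
Qed.

Lemma box_w G N : forall p, In p (box G N) -> 0 <= fst p.
Proof.
  induction G as [|y G IH]; intros p Hp.
  - destruct Hp as [<-|[]]; simpl; lra.
  - rewrite box_cons in Hp. apply in_flat_map in Hp. destruct Hp as [k [_ Hk]].
    apply in_map_iff in Hk. destruct Hk as [q [<- Hq]]. cbn [fst].
    apply Rmult_le_pos; [|apply IH, Hq]. left; apply Rinv_0_lt_compat, lt_0_INR; lia.
Qed.

Lemma EE_mono G N : forall h g, (forall a, h a <= g a) -> EE G N h <= EE G N g.
Proof.
  induction G as [|y G IH]; intros h g Hhg; cbn [EE]; [apply Hhg|].
  apply Rmult_le_compat_l; [left; apply Rinv_0_lt_compat, lt_0_INR; lia|].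
  apply sum_Rle. intros k _. apply IH. intros a; apply Hhg.
Qed.

Lemma EE_const G N : forall c, EE G N (fun _ => c) = c.
Proof.
  induction G as [|y G IH]; intros c; cbn [EE]; [reflexivity|].
  rewrite (sum_eq _ (fun _ => c)) by (intros; apply IH).
  rewrite sum_cte. field. apply not_O_INR; lia.
Qed.

Lemma EE_bounds G N h m M : (forall a, m <= h a <= M) -> m <= EE G N h <= M.
Proof.
  intros H. rewrite <- (EE_const G N m) at 1. rewrite <- (EE_const G N M).
  split; apply EE_mono; intros a; apply H.
Qed.

Lemma EE_abs G N h M : (forall a, Rabs (h a) <= M) -> Rabs (EE G N h) <= M.
Proof.
  intros H. apply Rabs_le. apply EE_bounds. intros a. pose proof (H a) as Ha.
  unfold Rabs in Ha; destruct (Rcase_abs (h a)); lra.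
Qed.

Lemma EE_shift N G : forall h M, (forall a, Rabs (h a) <= M) -> forall z, In z G ->
  Rabs (EE G N (fun a => h (ns_add z a)) - EE G N h) <= 2 * M / INR (S N).
Proof.
  assert (Hc : 0 < INR (S N)) by (apply lt_0_INR; lia).
  induction G as [|y G IH]; intros h M HM z Hz; [destruct Hz|].
  cbn [EE]. rewrite <- Rmult_minus_distr_l, <- minus_sum.
  rewrite Rabs_mult, Rabs_right by (left; apply Rinv_0_lt_compat, Hc).
  unfold Rdiv. rewrite (Rmult_comm (2 * M)). apply Rmult_le_compat_l; [left; apply Rinv_0_lt_compat, Hc|].
  destruct Hz as [<-|Hz].
  - rewrite (sum_eq _ (fun k => EE G N (fun a => h (ns_add (ns_scal (INR (S k)) y) a))
                               - EE G N (fun a => h (ns_add (ns_scal (INR k) y) a)))).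
    2:{ intros k _. f_equal. f_equal. apply functional_extensionality. intros a. rewrite idA2; reflexivity. }
    rewrite (telescope (fun k => EE G N (fun a => h (ns_add (ns_scal (INR k) y) a)))).
    eapply Rle_trans; [apply Rabs_triang|]. rewrite Rabs_Ropp.
    assert (forall k, Rabs (EE G N (fun a => h (ns_add (ns_scal (INR k) y) a))) <= M)
      by (intros k; apply EE_abs; intros a; apply HM).
    pose proof (H (S N)); pose proof (H 0%nat); lra.
  - eapply Rle_trans; [apply sum_f_R0_triangle|].
    eapply Rle_trans; [apply (sum_Rle _ (fun _ => 2 * M / INR (S N)))|].
    + intros k _. rewrite (functional_extensionality (fun a => h (ns_add z (ns_add (ns_scal (INR k) y) a)))
           (fun a => (fun b => h (ns_add (ns_scal (INR k) y) b)) (ns_add z a))).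
      2:{ intros a. simpl. rewrite idA3; reflexivity. }
      apply (IH (fun b => h (ns_add (ns_scal (INR k) y) b)) M); [intros a; apply HM| exact Hz].
    + rewrite sum_cte. right. field. lra.
Qed.
End Box.
Section Main.
Variables X Y : NormedSpace.
Variable f : X -> Y.

Definition psiF (z : X) (p : R * X) : Y := ns_scal (fst p) (vsub (f (ns_add z (snd p))) (f (snd p))).
Definition dflt : R * X := (0, ns_zero X).
Definition coords (G : list X) (N : nat) (z : X) : nat -> Y :=
  fun n => psiF z (nth n (box X G N) dflt).

Lemma norm_psiF_d z : ns_norm (psiF z dflt) = 0.
Proof. unfold psiF; simpl. rewrite ns_norm_scal, Rabs_R0; ring. Qed.

Lemma dist_psiF (x y : X) p : ndist (psiF x p) (psiF y p) = Rabs (fst p) * ndist (f (ns_add x (snd p))) (f (ns_add y (snd p))).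
Proof. unfold psiF, ndist. rewrite idS, idC, ns_norm_scal; reflexivity. Qed.

Lemma coords_summable G N z : summable (fun n => ns_norm (coords G N z n)).
Proof. exact (proj1 (series_fin (box X G N) dflt (fun p => ns_norm (psiF z p)) (norm_psiF_d z))). Qed.

Definition Fv (G : list X) (N : nat) (z : X) : l1 Y := exist _ (coords G N z) (coords_summable G N z).

Lemma Fv_norm G N z : l1_norm (Fv G N z) = EE X G N (fun a => ndist (f (ns_add z a)) (f a)).
Proof.
  unfold l1_norm; simpl proj1_sig. unfold coords.
  rewrite (proj2 (series_fin (box X G N) dflt (fun p => ns_norm (psiF z p)) (norm_psiF_d z))).
  rewrite <- box_E. f_equal. apply map_ext_in. intros p Hp.
  unfold psiF. rewrite ns_norm_scal, Rabs_pos_eq by (apply box_w with G N; exact Hp). reflexivity.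
Qed.

Lemma Fv_dist G N x y : l1_dist (Fv G N x) (Fv G N y) = EE X G N (fun a => ndist (f (ns_add x a)) (f (ns_add y a))).
Proof.
  unfold l1_dist; simpl proj1_sig. unfold coords.
  assert (Hd : (fun p => ndist (psiF x p) (psiF y p)) dflt = 0).
  { cbv beta. rewrite dist_psiF. unfold dflt; cbn [fst]. rewrite Rabs_R0; ring. }
  rewrite (proj2 (series_fin (box X G N) dflt (fun p => ndist (psiF x p) (psiF y p)) Hd)).
  rewrite <- box_E. f_equal. apply map_ext_in. intros p Hp.
  rewrite dist_psiF, Rabs_pos_eq by (apply box_w with G N; exact Hp). reflexivity.
Qed.

End Main.

Theorem theorem3p1 (X Y : NormedSpace) (HX : Banach X) (HY : Banach Y)
  (f : X -> Y) (Hf : coarse f) :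
  exists (I : Type) (U : (I -> Prop) -> Prop),
    ultrafilter U /\ nonprincipal U /\
    exists F : X -> I -> l1 Y,
      (forall x, l1_bounded_family (F x)) /\
      forall x y : X,
        exists L : R,
          ulim U (fun i => l1_dist (F x i) (F y i)) L /\
          rho_f f (ndist x y) <= L <= omega_f f (ndist x y) /\
          ulim U (fun i => l1_norm (F (vsub x y) i)) L.
Proof.
  set (P := fun (j i : list X * nat) => (forall z, In z (fst j) -> In z (fst i)) /\ (snd j <= snd i)%nat).
  destruct (UF.exists_ultra (list X * nat) (list X * nat) P ([], 0%nat)) as [U [HU HUP]].
  { intros j; exists j; split; [auto| lia]. }
  { intros [G1 n1] [G2 n2]. exists (G1 ++ G2, max n1 n2). intros [G N] [H1 H2]; simpl in *.
    split; split; simpl; try lia; intros z Hz; apply H1, in_or_app; auto. }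
  assert (HU' := HU). destruct HU' as [UT [UF [US [UI UU]]]].
  exists (list X * nat)%type, U. split; [exact HU|]. split.
  { intros i0 Hi0. apply UF. apply (US _ _ (UI _ _ Hi0 (HUP ([], S (snd i0))))).
    intros i [-> [_ Hn]]. simpl in Hn. lia. }
  assert (Homega : forall t a b, ndist a b <= t -> ndist (f a) (f b) <= omega_f f t).
  { intros t a b Hab. apply Rsup_ub.
    - apply Hf. pose proof (ndist_ge0 _ a b); lra.
    - exists a, b; split; [exact Hab| reflexivity]. }
  assert (Hrho : forall t a b, ndist a b >= t -> rho_f f t <= ndist (f a) (f b)).
  { intros t a b Hab. apply Rinf_lb.
    - intros s [u [v [_ ->]]]. apply ndist_ge0.
    - exists a, b; split; [exact Hab| reflexivity]. }
  exists (fun z i => Fv X Y f (fst i) (snd i) z). split.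
  { intros x. exists (omega_f f (ns_norm x)). intros [G N]. rewrite Fv_norm.
    apply (EE_bounds X G N _ 0). intros a. split; [apply ndist_ge0|].
    apply Homega. unfold ndist. rewrite idE. right; reflexivity. }
  intros x y.
  set (d := ndist x y).
  destruct (ulim_exists U (fun i => l1_dist (Fv X Y f (fst i) (snd i) x) (Fv X Y f (fst i) (snd i) y))
              (rho_f f d) (omega_f f d) HU) as [L [HL HLb]].
  { intros [G N]. simpl. rewrite Fv_dist. apply EE_bounds. intros a. split.
    - apply Hrho. unfold d, ndist. rewrite idB. right; reflexivity.
    - apply Homega. unfold d, ndist. rewrite idB. right; reflexivity. }
  exists L. split; [exact HL|]. split; [exact HLb|].
  apply (ulim_close U _ _ L HU HL).
  intros eps He.
  set (M := omega_f f d).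
  assert (HM : 0 <= M).
  { unfold M. eapply Rle_trans; [apply (ndist_ge0 _ (f x) (f y))| apply Homega; right; reflexivity]. }
  destruct (archimed_cor1 (eps / (2 * M + 1))) as [n0 [Hn0 Hn0']].
  { apply Rdiv_lt_0_compat; lra. }
  apply (US _ _ (HUP ([y], n0))). intros [G N] [HG HN]; simpl in HG, HN.
  simpl. rewrite Fv_dist, Fv_norm.
  set (h := fun a => ndist (f (ns_add (vsub x y) a)) (f a)).
  assert (Hh : forall a, Rabs (h a) <= M).
  { intros a. unfold h. rewrite Rabs_pos_eq by apply ndist_ge0. apply Homega. unfold d, ndist. rewrite idE. right; reflexivity. }
  rewrite (functional_extensionality (fun a => ndist (f (ns_add x a)) (f (ns_add y a))) (fun a => h (ns_add y a))).
  2:{ intros a. unfold h. rewrite idA. reflexivity. }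
  eapply Rle_lt_trans; [apply (EE_shift X N G h M Hh y (HG y (or_introl eq_refl)))|].
  assert (HNp : 0 < INR n0) by (apply lt_0_INR; lia).
  assert (INR n0 <= INR (S N)) by (apply le_INR; lia).
  apply (Rmult_lt_reg_r (/ (2 * M + 1))); [apply Rinv_0_lt_compat; lra|].
  apply Rle_lt_trans with (/ INR n0); [|unfold Rdiv in Hn0; lra].
  unfold Rdiv. rewrite Rmult_assoc, (Rmult_comm (/ INR (S N))), <- Rmult_assoc.
  apply Rle_trans with (1 * / INR (S N)).
  - apply Rmult_le_compat_r; [left; apply Rinv_0_lt_compat, lt_0_INR; lia|].
    apply (Rmult_le_reg_r (2 * M + 1)); [lra|]. rewrite Rmult_assoc, Rinv_l by lra. lra.
  - rewrite Rmult_1_l. apply Rinv_le_contravar; lra.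
Qed.
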